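(* Let $\tau$ be a veering triangulation of $M$ with dual graph $\Gamma$. The homology classes of the $AB$-chains and the $AB$-cycles together generate $H_1(\Gamma;\mathbb{Z})$ (and hence their images generate $H_1(M;\mathbb{Z})$).
   Context: $\tau$ is a veering triangulation of $M$ (taut ideal triangulation with cooriented faces, each tetrahedron having two bottom and two top faces, a bottom edge, a top edge and four side edges, angle sum $2\pi$ around edges, with a consistent right/left veer on edges). Dual graph $\Gamma$: a vertex inside each tetrahedron and for each face a directed edge crossing it from the tetrahedron for which it is a top face to the one for which it is a bottom face. For a face $f$ with $t$ the tetrahedron having $f$ as bottom face, $A(f)$ is the top face of $t$ meeting $f$ along the edge of $t$ of the same veer as the top edge of $t$. A directed path in $\Gamma$ entering $t$ across $f$ and leaving across $f'$ makes an anti-branching turn at $t$ if $f'=A(f)$ and a branching turn otherwise. The $AB$-cycles are the directed cycles of $\Gamma$ making only anti-branching turns (equivalently the cycles of the permutation $A$). For a directed cycle $c$ with $k>0$ branching turns, its $AB$ decomposition is $c=(p_1,\dots,p_k)$, the directed paths obtained by cutting $c$ at its branching turns (so each $p_i$ has only anti-branching turns in its interior). $c$ is an $AB$-chain if (1) each $p_i$ is a proper subpath of an $AB$-cycle $c_i$, with $c_i\neq c_j$ for $i\neq j$, and (2) each endpoint of each $p_i$ is visited exactly once by $c$. *)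

(* Defs.v *)
(* Combinatorial model of a veering triangulation
   (Regina-style face gluings of oriented tetrahedra with vertices 'I_4),
   its dual graph Gamma, AB-cycles, AB-chains and H_1(Gamma; Z). *)
From mathcomp Require Import all_boot all_order all_algebra all_fingroup.
Set Implicit Arguments. Unset Strict Implicit. Unset Printing Implicit Defensive.
Import GRing.Theory Num.Theory.

(* Face i of a tetrahedron is the face opposite vertex i. *)
Record tri_data := TriData {
  tet : finType;
  (* face i of t is glued to face (gl t i).2 of tetrahedron (gl t i).1 *)
  gl : tet -> 'I_4 -> tet * 'I_4;
  (* vertex correspondence of this gluing (extended to a permutation of 'I_4,
     sending the opposite vertex i to the opposite vertex (gl t i).2) *)
  gp : tet -> 'I_4 -> {perm 'I_4};
  (* the two vertices spanning the top edge (top diagonal) of t; the bottom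
     edge is spanned by the two other vertices *)
  topv : tet -> {set 'I_4};
  (* veer of the edge {a,b} of t : true = right veering, false = left *)
  veer : tet -> 'I_4 -> 'I_4 -> bool
}.

Section Veering.
Variable V : tri_data.
Local Notation T := (tet V).

(* oriented edges (t,a,b) of the tetrahedra, identified through gluings *)
Definition oedge := (T * 'I_4 * 'I_4)%type.

Definition edge_step (x y : oedge) : bool :=
  let: (t, a, b) := x in let: (t', a', b') := y in
  [exists i : 'I_4, [&& a != b, i != a, i != b, (gl t i).1 == t',
                        gp t i a == a' & gp t i b == b']].

(* edges of angle pi (top and bottom diagonals) *)
Definition pi_edge (x : oedge) : bool :=
  let: (t, a, b) := x in (a != b) && ((a \in topv t) == (b \in topv t)).

Definition ideal_triangulation : Prop :=
  [/\ (forall (t : T) i, gl t i != (t, i)),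
      (forall (t : T) i, gl (gl t i).1 (gl t i).2 = (t, i)),
      (forall (t : T) i, gp t i i = (gl t i).2),
      (forall (t : T) i, gp (gl t i).1 (gl t i).2 = (gp t i)^-1%g) &
  (* manifold: no edge is identified with itself in reverse *)
      (forall (t : T) (a b : 'I_4), a != b -> ~~ connect edge_step (t, a, b) (t, b, a))].

(* M oriented: tetrahedra consistently oriented by their vertex labelling *)
Definition oriented : Prop := forall (t : T) i, odd_perm (gp t i).

Definition taut : Prop :=
  (* a top edge and the opposite bottom edge (the angle-pi edges);
     coorientations of faces agree (each face is a top face of one
     tetrahedron and a bottom face of the other); angle sum 2 pi
     around each edge *)
  [/\ (forall t : T, #|topv t| = 2),
      (forall (t : T) i, (i \in topv t) != ((gl t i).2 \in topv (gl t i).1)) &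
      (forall (t : T) (a b : 'I_4), a != b ->
          #|[set x | connect edge_step (t, a, b) x & pi_edge x]| = 2)].

Definition veering_cond : Prop :=
  (* veer is a well-defined function on the edges of M *)
  [/\ (forall (t : T) a b, veer t a b = veer t b a),
      (forall (t : T) i (a b : 'I_4), a != i -> b != i ->
          veer t a b = veer (gl t i).1 (gp t i a) (gp t i b)) &
  (* viewed from above, going anticlockwise from an endpoint of the top
     edge, the side edges are right, left, right, left.  With bottom edge
     {s0,s1}, top edge {s2,s3} and (s0,s1,s2,s3) positively oriented (an
     even permutation of (0,1,2,3)) this means: *)
      (forall (t : T) (s : {perm 'I_4}), ~~ odd_perm s ->
          s (inord 0) \notin topv t -> s (inord 1) \notin topv t ->
          s (inord 2) \in topv t -> s (inord 3) \in topv t ->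
          [/\ veer t (s (inord 0)) (s (inord 2)), veer t (s (inord 1)) (s (inord 3)),
              ~~ veer t (s (inord 0)) (s (inord 3)) & ~~ veer t (s (inord 1)) (s (inord 2))])].

Definition veering_triangulation : Prop :=
  [/\ ideal_triangulation, oriented, taut & veering_cond].

(* Dual graph Gamma.  Edges of Gamma = faces of the triangulation, each
   represented as (t,i) where face i of t is a bottom face of t. *)
Definition face := {x : T * 'I_4 | x.2 \in topv x.1}.

(* the face f is a bottom face of headT f, and a top face of tailT f;
   the directed edge f goes from tailT f to headT f *)
Definition headT (f : face) : T := (val f).1.
Definition tailT (f : face) : T := (gl (val f).1 (val f).2).1.
Definition tail_idx (f : face) : 'I_4 := (gl (val f).1 (val f).2).2.

(* Entering t = headT f across f and leaving across g makes an
   anti-branching turn iff g = A(f), i.e. g is the top face of t meeting f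
   along the (side) edge of t having the same veer as the top edge of t. *)
Definition ab_turn (f g : face) : bool :=
  let t := headT f in
  (tailT g == t) &&
  [exists x : 'I_4, exists y : 'I_4, exists u : 'I_4, exists v : 'I_4,
    [&& x != y, x \notin [:: (val f).2; tail_idx g], y \notin [:: (val f).2; tail_idx g],
        u != v, u \in topv t, v \in topv t & veer t x y == veer t u v]].

Definition adj (f g : face) : bool := tailT g == headT f.

Definition dcycle (c : seq face) : bool := (c != [::]) && path.cycle adj c.

(* AB-cycles: the directed cycles making only anti-branching turns, with no
   repeated edge, i.e. the cycles of the permutation A *)
Definition AB_cycle (c : seq face) : bool :=
  [&& c != [::], uniq c & path.cycle ab_turn c].

Definition same_cycle (c d : seq face) : Prop := exists r, rot r c = d.

Definition proper_subpath (p c : seq face) : bool :=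
  (0 < size p < size c) && [exists r : 'I_(size c), p == take (size p) (rot r c)].

Definition branch_join (p q : seq face) : bool :=
  match rev p, q with
  | x :: _, y :: _ => ~~ ab_turn x y
  | _, _ => false
  end.

(* ps is the AB decomposition of c (up to the choice of starting point):
   ps cuts c exactly at its branching turns *)
Definition AB_decomp (c : seq face) (ps : seq (seq face)) : Prop :=
  [/\ exists r, rot r c = flatten ps,
      ps != [::],
      all (fun p => p != [::]) ps,
      all (sorted ab_turn) ps &
      path.cycle branch_join ps].

Definition endpoints (p : seq face) : seq T :=
  [seq tailT x | x <- take 1 p] ++ [seq headT x | x <- take 1 (rev p)].

Definition AB_chain (c : seq face) : Prop :=
  dcycle c /\
  exists ps, [/\ AB_decomp c ps,
    (exists cs : seq (seq face),
       [/\ size cs = size ps, all AB_cycle cs, all2 proper_subpath ps cs &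
           forall i j, i < size cs -> j < size cs -> i != j ->
             ~ same_cycle (nth [::] cs i) (nth [::] cs j)]) &
    (* (2) : vertex visits of c = tetrahedra entered *)
    (forall p, p \in ps -> forall v, v \in endpoints p ->
        count_mem v [seq headT x | x <- c] = 1)].

(* homology class (in C_1(Gamma;Z) = Z^faces) of a directed cycle *)
Definition hclass (c : seq face) (f : face) : int := (count_mem f c)%:Z.

(* H_1(Gamma;Z) = ker (boundary : Z^edges -> Z^vertices) *)
Definition is_H1 (z : face -> int) : Prop :=
  forall t : T, (\sum_(f | headT f == t) z f = \sum_(f | tailT f == t) z f)%R.

End Veering.

(* Main.v *)
Require Import Defs.
From mathcomp Require Import all_boot all_order all_algebra all_fingroup.
From mathcomp Require Import zify ring.
Import GRing.Theory Num.Theory.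

Module P1.
Set Implicit Arguments. Unset Strict Implicit. Unset Printing Implicit Defensive.
Import GRing.Theory Num.Theory.
Set Implicit Arguments. Unset Strict Implicit. Unset Printing Implicit Defensive.

Definition o0 : 'I_4 := @Ordinal 4 0 isT.
Definition o1 : 'I_4 := @Ordinal 4 1 isT.
Definition o2 : 'I_4 := @Ordinal 4 2 isT.
Definition o3 : 'I_4 := @Ordinal 4 3 isT.

Lemma I4P (i : 'I_4) : [\/ i = o0, i = o1, i = o2 | i = o3].
Proof.
case: i => -[|[|[|[|//]]]] H; [constructor 1|constructor 2|constructor 3|constructor 4];
  exact: val_inj.
Qed.

Lemma io0 : inord 0 = o0 :> 'I_4. Proof. by apply: val_inj; rewrite /= inordK. Qed.
Lemma io1 : inord 1 = o1 :> 'I_4. Proof. by apply: val_inj; rewrite /= inordK. Qed.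
Lemma io2 : inord 2 = o2 :> 'I_4. Proof. by apply: val_inj; rewrite /= inordK. Qed.
Lemma io3 : inord 3 = o3 :> 'I_4. Proof. by apply: val_inj; rewrite /= inordK. Qed.

Definition tbl (b g : bool) (x y : 'I_4) : bool :=
  match val x, val y with
  | 0,2 | 2,0 | 1,3 | 3,1 => true
  | 0,3 | 3,0 | 1,2 | 2,1 => false
  | 2,3 | 3,2 => b
  | _,_ => g end.

Lemma ex4 (P : pred 'I_4) : [exists x, P x] = [|| P o0, P o1, P o2 | P o3].
Proof.
apply/existsP/idP => [[x Px]|].
  by have [E|E|E|E] := I4P x; rewrite E in Px; rewrite Px ?orbT.
by case/or4P => H; eexists; exact: H.
Qed.

Definition Pc (v : 'I_4 -> 'I_4 -> bool) (i q : 'I_4) :=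
 [exists x : 'I_4, exists y : 'I_4, exists u : 'I_4, exists w : 'I_4,
    [&& x != y, x \notin [:: i; q], y \notin [:: i; q],
        u != w, u \in [:: o2; o3], w \in [:: o2; o3] & v x y == v u w]].

Definition PmS (S : {set 'I_4}) (v : 'I_4 -> 'I_4 -> bool) (i q : 'I_4) :=
 [exists x : 'I_4, exists y : 'I_4, exists u : 'I_4, exists w : 'I_4,
    [&& x != y, x \notin [:: i; q], y \notin [:: i; q],
        u != w, u \in S, w \in S & v x y == v u w]].

Lemma Pc_tbl b g i q : i \in [:: o2; o3] -> q \notin [:: o2; o3] ->
  Pc (tbl b g) i q = (b == ((i == o2) == (q == o0))).
Proof.
move=> Hi Hq; rewrite /Pc !ex4.
have [Ei|Ei|Ei|Ei] := I4P i; rewrite Ei in Hi * => //;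
have [Eq|Eq|Eq|Eq] := I4P q; rewrite Eq in Hq * => //;
case: b; case: g; vm_compute; reflexivity.
Qed.

Lemma Pc_ext v1 v2 i q : (forall x y, x != y -> v1 x y = v2 x y) -> Pc v1 i q = Pc v2 i q.
Proof.
move=> H; rewrite /Pc; apply: eq_existsb => x; apply: eq_existsb => y;
apply: eq_existsb => u; apply: eq_existsb => w.
case: (eqVneq x y) => //= xy; case: (eqVneq u w) => //= uw.
by rewrite !H.
Qed.

Lemma ex_perm (s : {perm 'I_4}) (P : pred 'I_4) : [exists x, P x] = [exists x, P (s x)].
Proof.
apply/existsP/existsP => [[x Px]|[x Px]]; last by exists (s x).
by exists (s^-1 x)%g; rewrite permKV.
Qed.

Lemma Pm_transport (S : {set 'I_4}) v (s : {perm 'I_4}) :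
  s o0 \notin S -> s o1 \notin S -> s o2 \in S -> s o3 \in S ->
  forall i q, PmS S v i q = Pc (fun x y => v (s x) (s y)) (s^-1 i)%g (s^-1 q)%g.
Proof.
move=> h0 h1 h2 h3 i q.
have memS u : (s u \in S) = (u \in [:: o2; o3]).
  by have [->|->|->|->] := I4P u; rewrite ?(negbTE h0) ?(negbTE h1) ?h2 ?h3.
have memI u : (s u \in [:: i; q]) = (u \in [:: (s^-1 i)%g; (s^-1 q)%g]).
  have e k : (s u == k) = (u == (s^-1 k)%g).
    by apply/eqP/eqP => [<-|->]; rewrite ?permK ?permKV.
  by rewrite !inE !e.
rewrite /PmS /Pc (ex_perm s); apply: eq_existsb => x.
rewrite (ex_perm s); apply: eq_existsb => y.
rewrite (ex_perm s); apply: eq_existsb => u.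
rewrite (ex_perm s); apply: eq_existsb => w.
by rewrite !(inj_eq (@perm_inj _ s)) !memS !memI.
Qed.

End P1.
Import P1.

Module P2.
Set Implicit Arguments. Unset Strict Implicit. Unset Printing Implicit Defensive.
Import GRing.Theory Num.Theory.
Set Implicit Arguments. Unset Strict Implicit. Unset Printing Implicit Defensive.

Lemma exS (S : {set 'I_4}) : #|S| = 2 -> exists s : {perm 'I_4},
  [/\ ~~ odd_perm s, s o0 \notin S, s o1 \notin S, s o2 \in S & s o3 \in S].
Proof.
move=> cS.
have /cards2P [a [b [ab ES]]] : #|S| == 2 by rewrite cS.
have cC : #|~: S| == 2.
  by have := cardsC S; rewrite card_ord cS => H; apply/eqP; lia.
have /cards2P [c [d [cd EC]]] := cC.
have aS : a \in S by rewrite ES !inE eqxx.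
have bS : b \in S by rewrite ES !inE eqxx orbT.
have cS' : c \notin S by rewrite -in_setC EC !inE eqxx.
have dS' : d \notin S by rewrite -in_setC EC !inE eqxx orbT.
have U : uniq [:: c; d; a; b].
  have ca : c != a by apply: contraNneq cS' => ->.
  have cb : c != b by apply: contraNneq cS' => ->.
  have da : d != a by apply: contraNneq dS' => ->.
  have db : d != b by apply: contraNneq dS' => ->.
  by rewrite /= !inE !negb_or cd ab ca cb da db.
pose f := fun i : 'I_4 => nth c [:: c; d; a; b] i.
have finj : injective f.
  by move=> i j /eqP; rewrite /f nth_uniq // => /eqP/val_inj.
pose s1 := perm finj.
have s1E i : s1 i = f i by rewrite permE.
case Hodd: (odd_perm s1).
- exists (tperm o0 o1 * s1)%g; rewrite odd_permM odd_tperm Hodd /= !permM.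
  by rewrite tpermL tpermR !tpermD // !s1E /f /= bS aS cS' dS'.
- by exists s1; rewrite Hodd !s1E /f /= bS aS cS' dS'.
Qed.

Lemma memS_gen (S : {set 'I_4}) (s : {perm 'I_4}) :
  s o0 \notin S -> s o1 \notin S -> s o2 \in S -> s o3 \in S ->
  forall u, (s u \in S) = (u \in [:: o2; o3]).
Proof.
by move=> h0 h1 h2 h3 u; have [->|->|->|->] := I4P u; rewrite ?(negbTE h0) ?(negbTE h1) ?h2 ?h3.
Qed.

Section Local.
Variables (S : {set 'I_4}) (v : 'I_4 -> 'I_4 -> bool).
Hypotheses (cS : #|S| = 2) (vsym : forall a b, v a b = v b a)
  (H3 : forall s : {perm 'I_4}, ~~ odd_perm s ->
          s (inord 0) \notin S -> s (inord 1) \notin S ->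
          s (inord 2) \in S -> s (inord 3) \in S ->
          [/\ v (s (inord 0)) (s (inord 2)), v (s (inord 1)) (s (inord 3)),
              ~~ v (s (inord 0)) (s (inord 3)) & ~~ v (s (inord 1)) (s (inord 2))]).

Lemma local_main : exists (s : {perm 'I_4}) (b : bool),
  [/\ s o0 \notin S, s o1 \notin S, s o2 \in S, s o3 \in S &
      forall i q, i \in S -> q \notin S ->
        PmS S v i q = (b == (((s^-1 i)%g == o2) == ((s^-1 q)%g == o0)))].
Proof.
have [s [ev h0 h1 h2 h3]] := exS cS.
have := H3 ev; rewrite !io0 !io1 !io2 !io3 => /(_ h0 h1 h2 h3) [E02 E13 E03 E12].
have E20 : v (s o2) (s o0) by rewrite vsym.
have E31 : v (s o3) (s o1) by rewrite vsym.
have E30 : ~~ v (s o3) (s o0) by rewrite vsym.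
have E21 : ~~ v (s o2) (s o1) by rewrite vsym.
pose b := v (s o2) (s o3); pose g := v (s o0) (s o1).
have Hv x y : x != y -> v (s x) (s y) = tbl b g x y.
  have [->|->|->|->] := I4P x; have [->|->|->|->] := I4P y => //= _;
  rewrite /tbl /= ?E02 ?E13 ?(negbTE E03) ?(negbTE E12) ?E20 ?E31 ?(negbTE E30) ?(negbTE E21) //;
  by rewrite /b /g vsym.
exists s, b; split => // i q iS qS.
rewrite (Pm_transport v h0 h1 h2 h3) (Pc_ext _ _ Hv) Pc_tbl //.
  by rewrite -(memS_gen h0 h1 h2 h3) permKV.
by rewrite -(memS_gen h0 h1 h2 h3) permKV.
Qed.

Lemma LE i : i \in S -> exists q, q \notin S /\ PmS S v i q.
Proof.
have [s [b [h0 h1 h2 h3 HP]]] := local_main => iS.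
pose q' := if b == ((s^-1 i)%g == o2) then o0 else o1.
exists (s q'); have qS : s q' \notin S.
  by rewrite (memS_gen h0 h1 h2 h3) /q'; case: ifP.
split => //; rewrite HP // permK /q'.
by clear HP qS; rewrite /q'; clear q'; move: ((s^-1 i)%g == o2) => X; case: b; case: X.
Qed.

Lemma notS_cases (s : {perm 'I_4}) q : s o0 \notin S -> s o1 \notin S -> s o2 \in S -> s o3 \in S ->
  q \notin S -> (s^-1 q)%g = o0 \/ (s^-1 q)%g = o1.
Proof.
move=> h0 h1 h2 h3; rewrite -{1}(permKV s q) (memS_gen h0 h1 h2 h3).
by have [->|->|->|->] := I4P (s^-1 q)%g; auto.
Qed.

Lemma inS_cases (s : {perm 'I_4}) q : s o0 \notin S -> s o1 \notin S -> s o2 \in S -> s o3 \in S ->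
  q \in S -> (s^-1 q)%g = o2 \/ (s^-1 q)%g = o3.
Proof.
move=> h0 h1 h2 h3; rewrite -{1}(permKV s q) (memS_gen h0 h1 h2 h3).
by have [->|->|->|->] := I4P (s^-1 q)%g; auto.
Qed.

Lemma LU i q1 q2 : i \in S -> q1 \notin S -> q2 \notin S -> PmS S v i q1 -> PmS S v i q2 -> q1 = q2.
Proof.
have [s [b [h0 h1 h2 h3 HP]]] := local_main => iS q1S q2S.
rewrite !HP // => /eqP E1 /eqP E2.
have Y : ((s^-1 q1)%g == o0) = ((s^-1 q2)%g == o0).
  clear HP; move: E1 E2; move: ((s^-1 i)%g == o2) ((s^-1 q1)%g == o0) ((s^-1 q2)%g == o0) => X Y1 Y2.
  by case: b; case: X; case: Y1; case: Y2.
apply: (@perm_inj _ (s^-1)%g).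
by case: (notS_cases h0 h1 h2 h3 q1S) Y => ->; case: (notS_cases h0 h1 h2 h3 q2S) => ->.
Qed.

Lemma LD i1 i2 q : i1 \in S -> i2 \in S -> i1 != i2 -> q \notin S ->
  PmS S v i1 q -> PmS S v i2 q -> False.
Proof.
have [s [b [h0 h1 h2 h3 HP]]] := local_main => i1S i2S ne qS.
rewrite !HP // => /eqP E1 /eqP E2.
have ne' : (s^-1 i1)%g != (s^-1 i2)%g by rewrite (inj_eq (@perm_inj _ _)).
have X12 : ((s^-1 i1)%g == o2) = ~~ ((s^-1 i2)%g == o2).
  by case: (inS_cases h0 h1 h2 h3 i1S) ne' => ->; case: (inS_cases h0 h1 h2 h3 i2S) => ->.
clear HP; move: E1 E2; rewrite X12; move: ((s^-1 i2)%g == o2) ((s^-1 q)%g == o0) => X Y.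
by case: b; case: X; case: Y.
Qed.

End Local.

End P2.
Import P2.

Module P3.
Set Implicit Arguments. Unset Strict Implicit. Unset Printing Implicit Defensive.
Import GRing.Theory Num.Theory.
Set Implicit Arguments. Unset Strict Implicit. Unset Printing Implicit Defensive.

Section Model.
Variable V : tri_data.
Hypothesis HV : veering_triangulation V.
Local Notation F := (face V).
Local Notation T := (tet V).

Lemma glK (t : T) i : gl (gl t i).1 (gl t i).2 = (t, i).
Proof. by case: HV => [[_ H _ _ _]] _ _ _; exact: H. Qed.
Lemma topdiff (t : T) i : (i \in topv t) != ((gl t i).2 \in topv (gl t i).1).
Proof. by case: HV => _ _ [_ H _] _; exact: H. Qed.
Lemma card2 (t : T) : #|topv t| = 2.
Proof. by case: HV => _ _ [H _ _] _; exact: H. Qed.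
Lemma vsym (t : T) a b : veer t a b = veer t b a.
Proof. by case: HV => _ _ _ [H _ _]; exact: H. Qed.
Lemma v3 (t : T) : forall s : {perm 'I_4}, ~~ odd_perm s ->
          s (inord 0) \notin topv t -> s (inord 1) \notin topv t ->
          s (inord 2) \in topv t -> s (inord 3) \in topv t ->
          [/\ veer t (s (inord 0)) (s (inord 2)), veer t (s (inord 1)) (s (inord 3)),
              ~~ veer t (s (inord 0)) (s (inord 3)) & ~~ veer t (s (inord 1)) (s (inord 2))].
Proof. by case: HV => _ _ _ [_ _ H]; exact: H. Qed.

Lemma in_top (f : F) : (val f).2 \in topv (headT f).
Proof. exact: valP f. Qed.

Lemma tail_notin (g : F) : tail_idx g \notin topv (tailT g).
Proof. by have := topdiff (val g).1 (val g).2; rewrite (valP g). Qed.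

Lemma val_gl_tail (g : F) : gl (tailT g) (tail_idx g) = val g.
Proof. by case: g => [[t i] Hi]; rewrite /tailT /tail_idx /= glK. Qed.

Lemma out_face (t : T) q : q \notin topv t -> exists g : F, tailT g = t /\ tail_idx g = q.
Proof.
move=> qS; have H : (gl t q).2 \in topv (gl t q).1.
  by move: (topdiff t q); rewrite (negbTE qS); case: (_ \in topv _).
by exists (exist _ (gl t q) H); rewrite /tailT /tail_idx /= glK.
Qed.

Lemma out_uniq (g1 g2 : F) : tailT g1 = tailT g2 -> tail_idx g1 = tail_idx g2 -> g1 = g2.
Proof. by move=> E1 E2; apply: val_inj; rewrite -val_gl_tail E1 E2 val_gl_tail. Qed.

Lemma abE0 (f g : F) : ab_turn f g =
  (tailT g == headT f) && PmS (topv (headT f)) (veer (headT f)) (val f).2 (tail_idx g).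
Proof. by []. Qed.

Lemma ab_ex (f : F) : exists g, ab_turn f g.
Proof.
have [q [qS Pq]] := LE (card2 _) (@vsym _) (@v3 _) (in_top f).
have [g [tg ig]] := out_face qS.
by exists g; rewrite abE0 tg eqxx ig.
Qed.

Lemma ab_uniq (f g1 g2 : F) : ab_turn f g1 -> ab_turn f g2 -> g1 = g2.
Proof.
rewrite !abE0 => /andP[/eqP t1 P1] /andP [/eqP t2 P2].
apply: out_uniq; first by rewrite t1 t2.
apply: (LU (card2 _) (@vsym _) (@v3 _) (in_top f) _ _ P1 P2).
  by have := tail_notin g1; rewrite t1.
by have := tail_notin g2; rewrite t2.
Qed.

Definition A (f : F) : F := odflt f [pick g | ab_turn f g].

Lemma abA (f : F) : ab_turn f (A f).
Proof.
rewrite /A; case: pickP => [g //|H].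
by have [g Hg] := ab_ex f; rewrite H in Hg.
Qed.

Lemma abE (f g : F) : ab_turn f g = (g == A f).
Proof. by apply/idP/eqP => [H|->]; [exact: ab_uniq H (abA f) | exact: abA]. Qed.

Lemma tailA (f : F) : tailT (A f) = headT f.
Proof. by have := abA f; rewrite abE0 => /andP[/eqP]. Qed.

Definition pf (f : F) : F :=
  insubd f ((val f).1, odflt (val f).2 [pick j in topv (val f).1 | j != (val f).2]).

Lemma card2_other (S : {set 'I_4}) i j k : #|S| = 2 -> i \in S -> j \in S -> k \in S ->
  j != i -> k != i -> j = k.
Proof.
move/eqP/cards2P => [a [b [ab ->]]]; rewrite !inE.
by do 3 case/orP => /eqP ->; rewrite ?eqxx // eq_sym ?(negbTE ab).
Qed.

Lemma pf_val (f : F) : exists j, [/\ val (pf f) = (headT f, j), j \in topv (headT f) & j != (val f).2].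
Proof.
rewrite /pf; case: pickP => [j /andP [jS ji]|H].
  by exists j; rewrite val_insubd /= jS.
exfalso; have := card2 (val f).1; move/eqP/cards2P => [a [b [ab E]]].
have := in_top f; rewrite /headT E !inE => /orP [] /eqP ei.
  by have := H b; rewrite E !inE eqxx orbT ei eq_sym ab.
by have := H a; rewrite E !inE eqxx ei ab.
Qed.

Lemma head_pf (f : F) : headT (pf f) = headT f.
Proof. by have [j [E _ _]] := pf_val f; rewrite /headT E. Qed.

Lemma pf_neq (f : F) : pf f != f.
Proof.
apply/negP => /eqP E; have [j [Ev _ ji]] := pf_val f.
by move: ji; rewrite -{1}E Ev eqxx.
Qed.

Lemma head_eq (f g : F) : headT g = headT f -> g = f \/ g = pf f.
Proof.
move=> hg; have [j [Ev jS ji]] := pf_val f.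
case: (eqVneq (val g).2 (val f).2) => e.
  left; apply: val_inj.
  by rewrite [val g]surjective_pairing [val f]surjective_pairing e; congr pair.
have gS : (val g).2 \in topv (headT f) by have := in_top g; rewrite hg.
right; apply: val_inj; rewrite Ev [val g]surjective_pairing; congr pair.
  exact: hg.
exact: (card2_other (card2 (headT f)) (in_top f) gS jS e ji).
Qed.

Lemma pfK (f : F) : pf (pf f) = f.
Proof.
have h : headT (pf (pf f)) = headT f by rewrite !head_pf.
case: (head_eq h) => // E.
by have := pf_neq (pf f); rewrite E eqxx.
Qed.

Lemma A_inj : injective A.
Proof.
move=> f1 f2 E; have h : headT f2 = headT f1 by rewrite -!tailA E.
case: (head_eq h) => // E2; exfalso.
have a1 := abA f1; have a2 := abA f2; rewrite -E E2 in a2.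
rewrite abE0 in a1; rewrite abE0 head_pf in a2.
move/andP: a1 => [/eqP t1 P1]; move/andP: a2 => [_ P2].
have [j [Ev jS ji]] := pf_val f1.
apply: (LD (card2 _) (@vsym _) (@v3 _) (in_top f1) _ _ _ P1 P2).
- by rewrite Ev.
- by rewrite Ev eq_sym.
- by have := tail_notin (A f1); rewrite t1.
Qed.

End Model.

End P3.
Import P3.

Module P4.
Set Implicit Arguments. Unset Strict Implicit. Unset Printing Implicit Defensive.
Import GRing.Theory Num.Theory.
Set Implicit Arguments. Unset Strict Implicit. Unset Printing Implicit Defensive.

Lemma path_flatten (X : Type) (r : rel X) x0 (ps : seq (seq X)) p0 :
  all (fun p => ~~ nilp p) ps -> all (sorted r) ps ->
  path (fun p q => r (last x0 p) (head x0 q)) p0 ps ->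
  path r (last x0 p0) (flatten ps).
Proof.
elim: ps p0 => //= q qs IH p0 /andP [nq nqs] /andP [sq sqs] /andP [rq pq].
rewrite cat_path; case: q nq sq rq pq => //= y q' _ sq rq pq.
rewrite rq sq /=; exact: (IH (y :: q')).
Qed.

Lemma cycle_flatten (X : Type) (r : rel X) x0 (ps : seq (seq X)) :
  all (fun p => ~~ nilp p) ps -> all (sorted r) ps ->
  path.cycle (fun p q => r (last x0 p) (head x0 q)) ps -> path.cycle r (flatten ps).
Proof.
move=> ne so; rewrite (cycle_path [::]) (cycle_path x0) => H.
have -> : last x0 (flatten ps) = last x0 (last [::] ps).
  elim/last_ind: ps ne {so H} => //= s x IH.
  rewrite all_rcons => /andP [nx _]; rewrite flatten_rcons last_cat last_rcons.
  by case: x nx.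
exact: path_flatten.
Qed.

Lemma cycle_iota (X : Type) (e : rel X) (G : nat -> X) m :
  0 < m -> (forall i, i < m -> e (G i) (G (i.+1 %% m))) ->
  path.cycle e [seq G i | i <- iota 0 m].
Proof.
case: m => // k _ H; rewrite (cycle_path (G 0)).
have -> : last (G 0) [seq G i | i <- iota 0 k.+1] = G k.
  by rewrite -nth_last size_map size_iota (nth_map 0) ?size_iota // nth_iota.
apply/(pathP (G 0)) => i; rewrite size_map size_iota => ik.
case: i ik => [|i] ik.
  by rewrite /= ; have := H k (ltnSn k); rewrite modnn.
rewrite [nth _ (_ :: _) _]/= (nth_map 0) ?size_iota ?(ltnW ik) // nth_iota ?(ltnW ik) //.
rewrite (_ : G 0 :: _ = [seq G i | i <- iota 0 k.+1]) // (nth_map 0) ?size_iota ?(ltnW ik) // nth_iota ?(ltnW ik) //.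
by have := H i (ltnW ik); rewrite modn_small.
Qed.

Lemma all2_map_iota (X Y : Type) (r : X -> Y -> bool) (G : nat -> X) (H : nat -> Y) m :
  (forall i, i < m -> r (G i) (H i)) ->
  all2 r [seq G i | i <- iota 0 m] [seq H i | i <- iota 0 m].
Proof.
move=> Hr; have : forall i, i \in iota 0 m -> r (G i) (H i).
  by move=> i; rewrite mem_iota => /andP [_ ]; apply: Hr.
elim: (iota 0 m) => //= a s IH Has.
apply/andP; split; first by apply: Has; rewrite inE eqxx.
by apply: IH => i si; apply: Has; rewrite inE si orbT.
Qed.

Local Open Scope ring_scope.

Lemma sum_rot (G : nat -> int) m : (0 < m)%N ->
  \sum_(i < m) G (i.+1 %% m)%N = \sum_(i < m) G i.
Proof.
case: m => // k _; rewrite big_ord_recr big_ord_recl /= modnn addrC; congr (_ + _).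
by apply: eq_bigr => i _; rewrite modn_small ?ltnS // /bump leq0n add1n.
Qed.

Lemma Posz_sum m (G : nat -> nat) : (\sum_(i < m) G i)%N%:Z = \sum_(i < m) (G i)%:Z.
Proof. exact: (big_morph Posz PoszD (erefl _)). Qed.

End P4.
Import P4.

Module P5.
Set Implicit Arguments. Unset Strict Implicit. Unset Printing Implicit Defensive.
Import GRing.Theory Num.Theory.
Set Implicit Arguments. Unset Strict Implicit. Unset Printing Implicit Defensive.

Section Abs.
Variable V : tri_data.
Hypothesis HV : veering_triangulation V.
Local Notation F := (face V).
Local Notation AA := (@A V).
Local Notation p := (@pf V).

Lemma Ainj : injective AA. Proof. exact: A_inj. Qed.
Lemma fsym : connect_sym (frel AA). Proof. exact: fconnect_sym Ainj. Qed.

Lemma AB_cycle_orbit x : AB_cycle (fingraph.orbit AA x).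
Proof.
apply/and3P; split; [|exact: fingraph.orbit_uniq|].
  by apply/eqP => E; have := fingraph.in_orbit AA x; rewrite E.
apply: sub_cycle (cycle_orbit Ainj x) => a b /eqP <-.
by rewrite (abE HV) eqxx.
Qed.

Lemma fconn_orbit x y : fconnect AA x y -> y \in fingraph.orbit AA x.
Proof. by rewrite fconnect_orbit. Qed.

Local Open Scope ring_scope.

Definition good (l : seq (int * seq F)) (z : F -> int) :=
  (forall x, x \in l -> AB_chain x.2 \/ AB_cycle x.2) /\
  (forall f, z f = \sum_(x <- l) x.1 * hclass x.2 f).

Lemma zero_defect (z : F -> int) : (forall f, z f = z (AA f)) -> exists l, good l z.
Proof.
move=> Hz.
have zc x y : fconnect AA x y -> z x = z y.
  move/iter_findex => <-; elim: (findex _ x y) => //= n ->; exact: Hz.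
exists [seq (z r, fingraph.orbit AA r) | r <- enum (froots AA)]; split.
  by move=> x /mapP [r _ ->]; right; exact: AB_cycle_orbit.
move=> f; rewrite big_map (bigD1_seq (froot AA f)) ?enum_uniq //; last first.
  by rewrite mem_enum; exact: roots_root fsym f.
rewrite big1_seq /= ?addr0.
  rewrite /hclass count_uniq_mem ?fingraph.orbit_uniq // -fconnect_orbit.
  rewrite (fsym (froot AA f) f) connect_root mulr1.
  by rewrite (zc f (froot AA f)) // connect_root.
move=> r /andP [rf]; rewrite mem_enum => rr.
rewrite /hclass count_uniq_mem ?fingraph.orbit_uniq // -fconnect_orbit.
case E: (fconnect AA r f); last by rewrite mulr0.
exfalso; move: rf; rewrite -(eqP rr); move/(fingraph.rootP fsym): E => ->.
by rewrite eqxx.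
Qed.

Definition antisym (z : F -> int) := forall f, z (p f) - z (AA (p f)) = - (z f - z (AA f)).

Lemma H1_antisym (z : F -> int) : is_H1 z -> antisym z.
Proof.
move=> hz f; have := hz (headT f).
have hp := head_pf HV f; have pn := pf_neq HV f.
rewrite (bigD1 f) //= (bigD1 (p f)) /=; last by rewrite hp eqxx pn.
rewrite big1; last first.
  move=> g /andP [/andP [/eqP hg gf] gpf].
  by case: (head_eq HV hg) => E; rewrite E eqxx in gf gpf.
rewrite (bigD1 (AA f)) /=; last by rewrite (tailA HV).
rewrite (bigD1 (AA (p f))) /=; last by rewrite (tailA HV) hp eqxx (inj_eq Ainj) pn.
rewrite big1; last first.
  move=> g /andP [/andP [/eqP hg gf] gpf].
  case: (injF_bij Ainj) => Ai K1 K2.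
  move: hg gf gpf; rewrite -(K2 g) (tailA HV) => hg.
  by case: (head_eq HV hg) => ->; rewrite eqxx.
rewrite !addr0 => E.
lia.
Qed.

Lemma perm_orbitA x : perm_eq (map AA (fingraph.orbit AA x)) (fingraph.orbit AA x).
Proof.
apply: uniq_perm; rewrite ?(map_inj_uniq Ainj) ?fingraph.orbit_uniq //.
move=> y; apply/mapP/idP => [[h hx ->]|yx].
  exact: fingraph.mem_orbit.
exists (finv AA y); last by rewrite f_finv //; exact: Ainj.
rewrite -fconnect_orbit; apply: connect_trans (fconnect_finv AA y).
by rewrite fconnect_orbit.
Qed.

Lemma sum_orbit (z : F -> int) x : \sum_(g <- fingraph.orbit AA x) (z g - z (AA g)) = 0.
Proof.
rewrite big_split /= sumrN -(big_map AA predT z) (perm_big _ (perm_orbitA x)).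
by rewrite subrr.
Qed.

Definition supp (z : F -> int) f := z f - z (AA f) != 0.

Definition nxt (z : F -> int) e :=
  odflt e [pick g | [&& g \in fingraph.orbit AA (p e), g != p e & supp z g]].

Lemma nxt_spec z (Hz : antisym z) e : supp z e ->
  [/\ fconnect AA (p e) (nxt z e), nxt z e != p e & supp z (nxt z e)].
Proof.
move=> se; rewrite /nxt; case: pickP => [g /and3P [go gp sg]|H].
  by rewrite fconnect_orbit.
exfalso; have sp : supp z (p e) by rewrite /supp Hz oppr_eq0.
have := sum_orbit z (p e); rewrite (bigD1_seq (p e)) ?fingraph.in_orbit ?fingraph.orbit_uniq //=.
rewrite big1_seq ?addr0; first by move/eqP; rewrite (negbTE sp).
move=> g /andP [gp go]; have := H g; rewrite go gp /= => /negbT.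
by rewrite negbK => /eqP.
Qed.

End Abs.

End P5.
Import P5.

Module P6.
Set Implicit Arguments. Unset Strict Implicit. Unset Printing Implicit Defensive.
Import GRing.Theory Num.Theory.
Set Implicit Arguments. Unset Strict Implicit. Unset Printing Implicit Defensive.

Section Chain.
Variable V : tri_data.
Hypothesis HV : veering_triangulation V.
Local Notation F := (face V).
Local Notation AA := (@A V).
Local Notation p := (@pf V).
Variables (m : nat) (w : nat -> F).
Hypotheses (m0 : 0 < m)
 (C1 : forall i, i < m -> fconnect AA (p (w i)) (w (i.+1 %% m)))
 (C2 : forall i, i < m -> w (i.+1 %% m) != p (w i))
 (C3 : forall i j, i < m -> j < m -> fconnect AA (p (w i)) (p (w j)) -> i = j).

Local Notation nx i := (i.+1 %% m).
Definition xs i := AA (p (w i)).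
Definition ln i := findex AA (xs i) (w (nx i)).
Definition seg i := traject AA (xs i) (ln i).+1.
Definition ps := [seq seg i | i <- iota 0 m].
Definition ch := flatten ps.

Let Ainj := Ainj HV.
Let fsy := P5.fsym HV.

Lemma nx_lt i : nx i < m. Proof. exact: ltn_pmod. Qed.

Lemma F1 i : i < m -> fconnect AA (xs i) (w (nx i)).
Proof.
move=> H; apply: connect_trans (C1 H); rewrite fsy; exact: fconnect1.
Qed.

Lemma F2 i : i < m -> iter (ln i) AA (xs i) = w (nx i).
Proof. by move=> H; rewrite /ln iter_findex // F1. Qed.

Lemma ordx i : fingraph.order AA (xs i) = fingraph.order AA (p (w i)).
Proof. exact: order_id_cycle (cycle_orbit Ainj _). Qed.

Lemma F4 i : i < m -> (ln i).+1 < fingraph.order AA (p (w i)).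
Proof.
move=> H; have lo := findex_max (F1 H); rewrite ordx -/(ln i) in lo.
rewrite ltn_neqAle lo andbT; apply/eqP => E; have := F2 H.
by rewrite /xs -iterSr E iter_order // => E'; move: (C2 H); rewrite -E' eqxx.
Qed.

Lemma seg_mem i g : g \in seg i -> fconnect AA (p (w i)) g.
Proof.
case/trajectP => k _ ->; apply: connect_trans (fconnect1 _ _) (fconnect_iter _ _ _).
Qed.

Lemma seg_uniq i : i < m -> uniq (seg i).
Proof.
move=> H; rewrite /seg -(@take_traject _ _ (fingraph.order AA (xs i))); last by rewrite ordx ltnW // F4.
by apply: take_uniq; exact: fingraph.orbit_uniq.
Qed.

Lemma seg_last i : i < m -> w (nx i) \in seg i.
Proof. by move=> H; apply/trajectP; exists (ln i) => //; rewrite F2. Qed.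

Lemma seg_nop i : i < m -> p (w i) \notin seg i.
Proof.
move=> H; apply/negP => /trajectP [k kl E].
have ko : k.+1 < fingraph.order AA (p (w i)) by apply: leq_ltn_trans (F4 H).
have := findex_iter ko; rewrite iterSr -/(xs i) -E findex0.
by [].
Qed.

Lemma seg_head i : seg i = xs i :: traject AA (AA (xs i)) (ln i).
Proof. by rewrite /seg trajectS. Qed.

Lemma seg_rcons i : seg i = rcons (traject AA (xs i) (ln i)) (iter (ln i) AA (xs i)).
Proof. by rewrite /seg trajectSr. Qed.

Lemma mem_ch i g : i < m -> g \in seg i -> g \in ch.
Proof.
move=> H gs; apply/flattenP; exists (seg i) => //.
by apply/mapP; exists i; rewrite // mem_iota.
Qed.

Lemma count_ch g : count_mem g ch = \sum_(i < m) count_mem g (seg i).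
Proof.
rewrite /ch count_flatten sumnE /ps -map_comp big_map -(big_mkord xpredT (fun i => count_mem g (seg i))) /index_iota subn0.
by [].
Qed.

Lemma xs_tail i : tailT (xs i) = headT (w i).
Proof. by rewrite /xs (tailA HV) (head_pf HV). Qed.

Lemma ch_dcycle : dcycle ch.
Proof.
apply/andP; split.
  by apply/eqP => E; have := mem_ch m0 (seg_last m0); rewrite E.
apply: (@cycle_flatten _ _ (w 0)).
- by apply/allP => s /mapP [i _ ->].
- apply/allP => s /mapP [i _ ->]; rewrite /seg /=.
  by apply: sub_path (fpath_traject _ _ _) => a b /eqP <-; rewrite /adj (tailA HV) eqxx.
apply: cycle_iota => // i H.
rewrite [in X in last _ X]seg_rcons last_rcons F2 // [in X in head _ X]seg_head /=.
by rewrite /adj xs_tail.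
Qed.

Lemma bj i j : i < m -> branch_join (seg i) (seg j) = ~~ ab_turn (w (nx i)) (xs j).
Proof.
move=> H; rewrite /branch_join [in rev _]seg_rcons rev_rcons F2 //.
Qed.

Lemma ch_decomp : AB_decomp ch ps.
Proof.
split.
- by exists 0; rewrite rot0.
- apply/eqP => E; have : seg 0 \in ps by apply/mapP; exists 0; rewrite ?mem_iota.
  by rewrite E.
- by apply/allP => s /mapP [i _ ->].
- apply/allP => s /mapP [i _ ->]; rewrite /seg /=.
  by apply: sub_path (fpath_traject _ _ _) => a b /eqP <-; rewrite (abE HV) eqxx.
apply: cycle_iota => // i H.
by rewrite bj // (abE HV) /xs (inj_eq Ainj) (pf_neq HV).
Qed.

Lemma proper_seg i : i < m -> proper_subpath (seg i) (fingraph.orbit AA (p (w i))).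
Proof.
move=> H; apply/andP; split; first by rewrite size_traject size_orbit F4.
have h1 : 1 < size (fingraph.orbit AA (p (w i))).
  by rewrite size_orbit; apply: leq_ltn_trans (F4 H).
apply/existsP; exists (Ordinal h1) => /=.
rewrite size_traject /fingraph.orbit -orderSpred trajectS rot1_cons -cats1 takel_cat.
  by rewrite take_traject // -ltnS orderSpred F4.
by rewrite size_traject -ltnS orderSpred F4.
Qed.

Definition cs := [seq fingraph.orbit AA (p (w i)) | i <- iota 0 m].

Lemma ch_cs : [/\ size cs = size ps, all (@AB_cycle V) cs, all2 (@proper_subpath V) ps cs &
           forall i j, i < size cs -> j < size cs -> i != j ->
             ~ same_cycle (nth [::] cs i) (nth [::] cs j)].
Proof.
split.
- by rewrite !size_map.
- by apply/allP => s /mapP [i _ ->]; exact: AB_cycle_orbit.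
- exact: all2_map_iota proper_seg.
move=> i j; rewrite size_map size_iota => im jm ij [r E].
rewrite !(nth_map 0) ?size_iota // !nth_iota // !add0n in E.
have : p (w j) \in rot r (fingraph.orbit AA (p (w i))) by rewrite E fingraph.in_orbit.
rewrite mem_rot -fconnect_orbit => /(C3 im jm) eij.
by move: ij; rewrite eij eqxx.
Qed.

Lemma ep i : i < m -> endpoints (seg i) = [:: headT (w i); headT (w (nx i))].
Proof.
move=> H; rewrite /endpoints.
have -> : take 1 (seg i) = [:: xs i] by rewrite seg_head /= take0.
have -> : take 1 (rev (seg i)) = [:: w (nx i)] by rewrite seg_rcons rev_rcons F2 //= take0.
by rewrite /= xs_tail.
Qed.

Lemma count_pw j : j < m -> count_mem (p (w j)) ch = 0.
Proof.
move=> jm; apply/count_memPn/negP => /flattenP [s /mapP [i im ->]] Hs.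
move: im; rewrite mem_iota add0n => /andP [_ im].
have eij := C3 im jm (seg_mem Hs).
by rewrite eij (negbTE (seg_nop jm)) in Hs.
Qed.

Lemma count_w j : j < m -> count_mem (w j) ch = 1.
Proof.
move=> jm.
pose i0 := if j is j'.+1 then j' else m.-1.
have i0m : i0 < m by rewrite /i0; case: j jm {i0} => [|j'] /=; lia.
have ni0 : nx i0 = j.
  rewrite /i0; case: j jm {i0 i0m} => [|j'] jm; first by rewrite prednK // modnn.
  by rewrite modn_small.
rewrite count_ch (bigD1 (Ordinal i0m)) // big1 ?addn0.
  have H := seg_last i0m; rewrite ni0 in H.
  by rewrite count_uniq_mem; [rewrite H | exact: seg_uniq].
move=> i ne; apply/count_memPn/negP => Hs.
have c1 := seg_mem Hs.
have c2 := C1 i0m; rewrite ni0 fsy in c2.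
have := C3 (ltn_ord i) i0m (connect_trans c1 c2) => eii.
by move: ne; rewrite (_ : i = Ordinal i0m) ?eqxx //; apply: val_inj.
Qed.

Lemma ch_count j : j < m -> count_mem (headT (w j)) [seq headT x | x <- ch] = 1.
Proof.
move=> jm; rewrite count_map.
rewrite (eq_count (a2 := predU (pred1 (w j)) (pred1 (p (w j))))); last first.
  move=> x /=; apply/eqP/orP => [E|[/eqP->|/eqP->]] //; last by rewrite (head_pf HV).
  by case: (head_eq HV E) => ->; [left|right].
have := count_predUI (pred1 (w j)) (pred1 (p (w j))) ch.
rewrite (eq_count (a1 := predI _ _) (a2 := pred0)) ?count_pred0; last first.
  move=> x /=; apply/andP => -[/eqP -> /eqP E].
  by move: (pf_neq HV (w j)); rewrite -E eqxx.
by rewrite addn0 => ->; rewrite count_w // count_pw.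
Qed.

Lemma ch_chain : AB_chain ch.
Proof.
split; first exact: ch_dcycle.
exists ps; split; first exact: ch_decomp.
  by exists cs; exact: ch_cs.
move=> s /mapP [i im ->] v; move: im; rewrite mem_iota add0n => /andP [_ im].
rewrite ep // !inE => /orP [] /eqP ->; apply: ch_count => //; exact: nx_lt.
Qed.

Local Open Scope ring_scope.

Lemma traj_defect x n f : (count_mem f (traject AA x n.+1))%:Z - (count_mem (AA f) (traject AA x n.+1))%:Z
  = (f == iter n AA x)%:Z - (AA f == x)%:Z.
Proof.
elim: n x => [|n IH] x.
  by rewrite /= !addn0 (eq_sym x) (eq_sym x).
move: (IH (AA x)); rewrite -iterSr (inj_eq Ainj) [traject _ x _]trajectS.
move: (traject AA (AA x) n.+1) => s /=.
rewrite !PoszD (eq_sym x f) (eq_sym x (AA f)).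
move=> E; apply/eqP; rewrite -subr_eq0; apply/eqP; move: E; set a := (_ == x)%:Z; set b := (AA f == x)%:Z; set d := (f == AA _)%:Z; set c1 := Posz (count_mem f s); set c2 := Posz (count_mem (AA f) s) => E; lia.
Qed.

Definition Dch f := \sum_(i < m) ((f == w (nx i))%:Z - (f == p (w i))%:Z).

Lemma hclass_defect f : hclass ch f - hclass ch (AA f) = Dch f.
Proof.
rewrite /hclass !count_ch (Posz_sum m (fun i => count_mem f (seg i))) (Posz_sum m (fun i => count_mem (AA f) (seg i))) -sumrB; apply: eq_bigr => i _.
by rewrite /seg traj_defect F2 // /xs (inj_eq Ainj).
Qed.

Lemma pinj : injective p. Proof. exact: can_inj (pfK HV). Qed.

Lemma D_antisym f : Dch (p f) = - Dch f.
Proof.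
rewrite /Dch !sumrB.
rewrite (eq_bigr (fun i : 'I_m => (f == p (w (nx i)))%:Z)); last first.
  by move=> i _; rewrite -{1}(pfK HV (w _)) (inj_eq pinj).
rewrite [X in _ - X](eq_bigr (fun i : 'I_m => (f == w i)%:Z)); last first.
  by move=> i _; rewrite (inj_eq pinj).
rewrite (sum_rot (fun k => (f == p (w k))%:Z) m0) -(sum_rot (fun k => (f == w k)%:Z) m0).
by rewrite opprB.
Qed.

Lemma D0 f : (forall i, (i < m)%N -> (f != w i) && (f != p (w i))) -> Dch f = 0.
Proof.
move=> H; rewrite /Dch big1 // => i _.
have /andP [h1 _] := H _ (nx_lt i); have /andP [_ h2] := H _ (ltn_ord i).
by rewrite (negbTE h1) (negbTE h2).
Qed.

Lemma D_w0 : Dch (w 0) = 1.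
Proof.
rewrite /Dch sumrB (sum_rot (fun k => (w 0 == w k)%:Z) m0).
rewrite (bigD1 (Ordinal m0)) //= eqxx big1 ?addr0; last first.
  move=> i ne; case: eqP => // E; exfalso; move: ne; rewrite (_ : i = Ordinal m0) ?eqxx //.
  apply: val_inj => /=; apply: (C3 (ltn_ord i) m0); rewrite -E; exact: connect0.
rewrite big1 ?subr0 //.
move=> i _; case: eqP => // E; exfalso.
have mm : (m.-1 < m)%N by lia.
have nm : nx m.-1 = 0%N by rewrite prednK // modnn.
have c := C1 mm; rewrite nm E in c.
have eij := C3 mm (ltn_ord i) c.
by have := C2 mm; rewrite nm E -eij eqxx.
Qed.

End Chain.

Section ChainStep.
Local Open Scope ring_scope.
Lemma chain_step (V : tri_data) (HV : veering_triangulation V) (m : nat) (w : nat -> face V) :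
  (0 < m)%N ->
  (forall i, (i < m)%N -> fconnect (@A V) (pf (w i)) (w (i.+1 %% m)%N)) ->
  (forall i, (i < m)%N -> w (i.+1 %% m)%N != pf (w i)) ->
  (forall i j, (i < m)%N -> (j < m)%N -> fconnect (@A V) (pf (w i)) (pf (w j)) -> i = j) ->
  exists c : seq (face V), [/\ AB_chain c,
    forall f, hclass c f - hclass c (A f) = Dch m w f,
    forall f, Dch m w (pf f) = - Dch m w f,
    forall f, (forall i, (i < m)%N -> (f != w i) && (f != pf (w i))) -> Dch m w f = 0 &
    Dch m w (w 0%N) = 1].
Proof.
move=> m0 C1 C2 C3; exists (ch m w); split.
- by apply: ch_chain.
- by move=> f; apply: hclass_defect.
- by move=> f; apply: D_antisym.
- by move=> f; apply: D0.
- by apply: D_w0.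
Qed.
End ChainStep.

End P6.
Import P6.

Module P7.
Set Implicit Arguments. Unset Strict Implicit. Unset Printing Implicit Defensive.
Import GRing.Theory Num.Theory.
Set Implicit Arguments. Unset Strict Implicit. Unset Printing Implicit Defensive.

Section Main.
Variable V : tri_data.
Hypothesis HV : veering_triangulation V.
Local Notation F := (face V).
Local Notation AA := (@A V).
Local Notation p := (@pf V).
Let fsy := P5.fsym HV.

Lemma find_chain (z : F -> int) (Hz : antisym z) e0 : supp z e0 ->
  exists m (w : nat -> F), [/\ 0 < m,
  (forall i, i < m -> supp z (w i)),
  (forall i, i < m -> fconnect AA (p (w i)) (w (i.+1 %% m))),
  (forall i, i < m -> w (i.+1 %% m) != p (w i)) &
  (forall i j, i < m -> j < m -> fconnect AA (p (w i)) (p (w j)) -> i = j)].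
Proof.
move=> s0.
pose e k := iter k (nxt z) e0.
have se k : supp z (e k) by elim: k => //= k IH; have [] := nxt_spec HV Hz IH.
have eS k : e k.+1 = nxt z (e k) by [].
have nxS k : [/\ fconnect AA (p (e k)) (e k.+1), e k.+1 != p (e k) & supp z (e k.+1)].
  by have := nxt_spec HV Hz (se k); rewrite -eS.
pose R k := froot AA (p (e k)).
have RP a b : (R a == R b) = fconnect AA (p (e a)) (p (e b)) by rewrite /R fingraph.root_connect.
pose P := fun K => R K \in [seq R i | i <- iota 0 K].
have exP : exists K, P K.
  have nu : ~~ uniq [seq R i | i <- iota 0 #|{: F}|.+1].
    apply/negP => U.
    have sub : {subset [seq R i | i <- iota 0 #|{: F}|.+1] <= enum {: F}} by move=> x _; rewrite mem_enum.
    by have := uniq_leq_size U sub; rewrite size_map size_iota -cardT ltnn.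
  case/(uniqPn (R 0)): nu => a [b [ab bs Eab]].
  rewrite size_map size_iota in bs.
  rewrite !(nth_map 0) ?size_iota ?(ltn_trans ab) // !nth_iota ?(ltn_trans ab) // !add0n in Eab.
  by exists b; rewrite /P -Eab; apply: map_f; rewrite mem_iota add0n ab.
case: (ex_minnP exP) => K PK Kmin.
move/mapP: PK => [J]; rewrite mem_iota add0n => /andP [_ JK] RJK.
have Mn a b : a < b -> b < K -> R a != R b.
  move=> ab bK; apply/negP => /eqP Eab; have := Kmin b.
  rewrite /P -Eab (map_f _ (_ : a \in iota 0 b)) ?mem_iota ?add0n ?ab // => /(_ isT).
  by rewrite leqNgt bK.
have key a b : J < a -> a < b -> b <= K -> R a != R b.
  move=> Ja ab bK; case: (ltngtP b K) => [bK'|Kb|bE]; first exact: Mn.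
    by move: bK; rewrite leqNgt Kb.
  by rewrite bE RJK eq_sym; apply: Mn => //; rewrite -bE.
pose m := K - J; pose w i := e (J.+1 + i).
have m0 : 0 < m by rewrite /m subn_gt0.
have wK : w m.-1 = e K by rewrite /w; congr e; rewrite /m; lia.
have fJK : fconnect AA (p (e K)) (p (e J)) by rewrite -RP RJK.
have w0 : w 0 = nxt z (e J) by rewrite /w addn0.
exists m, w; split => //.
- by move=> i _; apply: se.
- move=> i im; case: (ltngtP i.+1 m) => [lt|mi|Em].
  - rewrite modn_small // /w addnS eS; by case: (nxS (J.+1 + i)).
  - by rewrite ltnNge im in mi.
  rewrite Em modnn w0; have -> : w i = e K by rewrite -wK -Em.
  apply: connect_trans fJK _; by case: (nxS J).
- move=> i im; case: (ltngtP i.+1 m) => [lt|mi|Em].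
  - rewrite modn_small // /w addnS eS; by case: (nxS (J.+1 + i)).
  - by rewrite ltnNge im in mi.
  rewrite Em modnn w0; have -> : w i = e K by rewrite -wK -Em.
  apply/negP => /eqP E.
  have eJ1 : e J.+1 = p (e K) by rewrite eS.
  case: (ltngtP m 2) => [m1|m3|m2].
  + have KJ : K = J.+1 by rewrite /m in m1; lia.
    by move: (pf_neq HV (e K)); rewrite -eJ1 KJ eqxx.
  + have Hk : R J.+1 = R K.-1.
      apply/eqP; rewrite RP eJ1 (pfK HV) fsy.
      have KS : K.-1.+1 = K by lia.
      by case: (nxS K.-1); rewrite KS.
    have := Mn J.+1 K.-1; rewrite Hk eqxx => H; suff : false by []; rewrite /m in m3; apply: H; lia.
  + have KJ : K = J.+2 by rewrite /m in m2; lia.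
    by case: (nxS J.+1) => _ + _; rewrite -KJ eJ1 (pfK HV) eqxx.
- move=> i j im jm c.
  have Rij : R (J.+1 + i) = R (J.+1 + j) by apply/eqP; rewrite RP.
  case: (ltngtP i j) => // [ij|ji].
    have := key (J.+1 + i) (J.+1 + j); rewrite Rij eqxx => H.
    by suff : false by []; rewrite /m in jm; apply: H; lia.
  have := key (J.+1 + j) (J.+1 + i); rewrite Rij eqxx => H.
  by suff : false by []; rewrite /m in im; apply: H; lia.
Qed.

Local Open Scope ring_scope.

Lemma main_ind n : forall z : F -> int, antisym z -> (#|[pred f | supp z f]| <= n)%N ->
  exists l, good l z.
Proof.
elim: n => [|n IH] z Hz Hc.
  apply: (zero_defect HV) => f; apply/eqP; rewrite -subr_eq0; apply/negPn/negP => sf.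
  have H : (0 < #|[pred f | supp z f]|)%N by apply/card_gt0P; exists f.
  by rewrite leqNgt H in Hc.
case: (pickP (supp z)) => [e0 s0|H0]; last first.
  apply: (zero_defect HV) => f; apply/eqP; rewrite -subr_eq0; apply/negPn/negP => sf.
  by have := H0 f; rewrite /supp sf.
have [m [w [m0 Sw C1 C2 C3]]] := find_chain Hz s0.
have [c [Cc Cd Ca C0 Cw]] := chain_step HV m0 C1 C2 C3.
pose a := z (w 0%N) - z (AA (w 0%N)).
pose z' := fun f => z f - a * hclass c f.
have dz' f : z' f - z' (AA f) = (z f - z (AA f)) - a * Dch m w f.
  by rewrite -Cd /z'; ring.
have Hz' : antisym z'.
  by move=> f; rewrite !dz' Hz Ca; ring.
have sub f : supp z' f -> supp z f.
  rewrite /supp dz'; apply: contraNN => /eqP E.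
  rewrite E C0 ?mulr0 ?subr0 // => i im; apply/andP; split.
    by apply: contraNneq (Sw _ im) => <-; rewrite E.
  by apply: contraNneq (Sw _ im) => Ef; rewrite -oppr_eq0 -Hz -Ef E.
have nw0 : ~~ supp z' (w 0%N) by rewrite /supp dz' Cw mulr1 subrr eqxx.
have card : (#|[pred f | supp z' f]| < #|[pred f | supp z f]|)%N.
  apply: proper_card; apply/properP; split.
    by apply/subsetP => f; rewrite !inE; exact: sub.
  by exists (w 0%N); rewrite !inE ?(negbTE nw0) ?Sw.
have [l' [G1 G2]] : exists l, good l z' by apply: IH => //; rewrite -ltnS (leq_trans card).
exists ((a, c) :: l'); split.
  by move=> x; rewrite inE => /orP [/eqP -> | /G1] //; left.
move=> f; rewrite big_cons -G2 /z' /=.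
by rewrite addrC subrK.
Qed.

End Main.

End P7.
Import P7.

Local Open Scope ring_scope.

Theorem mainTheorem18 (V : tri_data) (HV : veering_triangulation V)
    (z : face V -> int) (hz : is_H1 z) :
  exists l : seq (int * seq (face V)),
    (forall x, x \in l -> AB_chain x.2 \/ AB_cycle x.2) /\
    (forall f, z f = \sum_(x <- l) x.1 * hclass x.2 f).
Proof.
have Hz := H1_antisym HV hz.
have [l [G1 G2]] := main_ind HV Hz (max_card _).
by exists l.
Qed.
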